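(* For any dimension $d$ and any $d$-dimensional freezing cellular automaton $F$, there is a $d$-dimensional freezing cellular automaton $G$ with neighborhood $\mathrm{VN}_d$ that simulates $F$.
   Context: A $d$-dimensional cellular automaton (CA) is $F=(d,Q,N,f)$ with $Q$ finite, $N\subset\mathbb{Z}^d$ finite, $f:Q^N\to Q$, global map $F(c)_z=f(c|_{z+N})$. A CA is freezing if there is a partial order $\preceq$ on $Q$ with $F(c)_z\preceq c_z$ for all configurations $c$ and cells $z$. $\mathrm{VN}_d=\{\vec 0,\pm e_1,\dots,\pm e_d\}$. Simulation: $F'$ (states $Q_{F'}$) simulates $G'$ (states $Q_{G'}$), both of dimension $d$, if there exist $T>0$, a rectangular block $B\subseteq\mathbb{Z}^d$ with size-vector $b$, a finite $C\subset\mathbb{Z}^d$ with $\vec 0\in C$, and $\phi:Q_{G'}^C\to Q_{F'}^B$ such that $\bar\phi(c)_{bz+r}=\phi(c|_{z+C})_r$ ($z\in\mathbb{Z}^d,r\in B$, $bz$ componentwise) defines an injective map $\bar\phi$ with $\bar\phi(G'(c))=F'^T(\bar\phi(c))$ for all configurations $c$. *)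

(* Defs.v *)
From HB Require Import structures.
From mathcomp Require Import all_boot all_order all_algebra.
From mathcomp Require Import finmap.
Set Implicit Arguments.
Unset Strict Implicit.
Unset Printing Implicit Defensive.
Import Order.TTheory GRing.Theory Num.Theory.
Local Open Scope ring_scope.
Local Open Scope fset_scope.

Definition cell (d : nat) := {ffun 'I_d -> int}.

Definition config (d : nat) (Q : Type) := cell d -> Q.

Record CA (d : nat) := MkCA {
  ca_Q : finType;
  ca_N : {fset cell d};
  ca_f : {ffun ca_N -> ca_Q} -> ca_Q }.

Definition restr (d : nat) (Q : Type) (A : {fset cell d}) (c : config d Q)
  (z : cell d) : {ffun A -> Q} := [ffun n : A => c (z + val n)%R].

Definition global (d : nat) (F : CA d) (c : config d (ca_Q F)) : config d (ca_Q F) :=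
  fun z => ca_f (restr (ca_N F) c z).
Arguments global {d} F c z.

Definition partial_order (Q : Type) (R : Q -> Q -> Prop) : Prop :=
  (forall x, R x x) /\ (forall x y, R x y -> R y x -> x = y) /\
  (forall x y z, R x y -> R y z -> R x z).

Definition freezing (d : nat) (F : CA d) : Prop :=
  exists R : ca_Q F -> ca_Q F -> Prop, partial_order R /\
    forall (c : config d (ca_Q F)) (z : cell d), R (global F c z) (c z).

Definition unitv (d : nat) (i : 'I_d) : cell d := [ffun j => (i == j)%:Z].

Definition VN (d : nat) : {fset cell d} :=
  [fset (0 : cell d)] `|` [fset unitv i | i : 'I_d] `|` [fset - unitv i | i : 'I_d].

(* Block decomposition: every x in Z^d is uniquely b z + r with 0 <= r_i < b_i
   (for b with positive entries); z = blockidx, r = blockoff. *)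
Definition blockidx (d : nat) (b x : cell d) : cell d := [ffun i => (x i %/ b i)%Z].
Definition blockoff (d : nat) (b x : cell d) : cell d := [ffun i => (x i %% b i)%Z].
Definition cmul (d : nat) (b z : cell d) : cell d := [ffun i => b i * z i].

Definition in_block (d : nat) (b r : cell d) : Prop := forall i, 0 <= r i < b i.

(* bar phi (c)_{b z + r} = phi (c|_{z+C})_r, for z in Z^d and r in B.
   phi : Q_G^C -> Q_F^B is represented by a function whose values are only
   read at r in B. *)
Definition barphi (d : nat) (QG QF : Type) (b : cell d) (C : {fset cell d})
  (phi : {ffun C -> QG} -> cell d -> QF) (c : config d QG) : config d QF :=
  fun x => phi (restr C c (blockidx b x)) (blockoff b x).
Arguments barphi {d QG QF} b {C} phi c x.

Definition simulates (d : nat) (F' G' : CA d) : Prop :=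
  exists (T : nat) (b : cell d) (C : {fset cell d})
         (phi : {ffun C -> ca_Q G'} -> cell d -> ca_Q F'),
    (0 < T)%N /\ (forall i, 0 < b i) /\ (0 : cell d) \in C /\
    injective (barphi b phi) /\
    forall c : config d (ca_Q G'),
      barphi b phi (global G' c) = iter T (global F') (barphi b phi c).

(* Main.v *)
Require Import Defs.
From mathcomp Require Import all_boot all_order all_algebra.
From mathcomp Require Import finmap.
From mathcomp Require Import zify.
From Stdlib Require Import ClassicalEpsilon FunctionalExtensionality.
Set Implicit Arguments.
Unset Strict Implicit.
Unset Printing Implicit Defensive.
Import GRing.Theory Num.Theory.
Local Open Scope fset_scope.

Lemma absz_pred (m : int) : (0 < m)%R -> absz (m - 1)%R = (absz m).-1.
Proof. case: m => [[|n]|n] //= _. by rewrite subn1. Qed.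
Lemma absz_succ (m : int) : (m < 0)%R -> absz (m + 1)%R = (absz m).-1.
Proof. case: m => [n|n] //= _. rewrite NegzE -[n.+1]addn1 PoszD opprD subrK abszN. by []. Qed.

Definition norm1 (d : nat) (y : cell d) : nat := (\sum_(i < d) absz (y i))%N.

Lemma norm1_ge (d : nat) (y : cell d) i : (absz (y i) <= norm1 y)%N.
Proof. by rewrite /norm1 (bigD1 i) //= leq_addr. Qed.

Lemma norm1_upd (d : nat) (y w : cell d) i :
  (forall j, j != i -> w j = y j) ->
  (norm1 w + absz (y i) = norm1 y + absz (w i))%N.
Proof.
move=> H; rewrite /norm1 (bigD1 i) //= [in RHS](bigD1 i) //=.
rewrite (eq_bigr (fun j => absz (y j))); last by move=> j /H ->.
rewrite addnAC [in RHS]addnAC; rewrite [(absz (w i) + _)%N]addnC; done.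
Qed.

Lemma norm1_0 (d : nat) : norm1 (0%R : cell d) = 0%N.
Proof. by rewrite /norm1 big1 // => i _; rewrite ffunE. Qed.

Lemma norm1_eq0 (d : nat) (y : cell d) : norm1 y = 0%N -> y = 0%R.
Proof.
move=> H; apply/ffunP => i; rewrite ffunE.
by have := norm1_ge y i; rewrite H leqn0 absz_eq0 => /eqP.
Qed.

Lemma norm1_D (d : nat) (y w : cell d) : (norm1 (y + w)%R <= norm1 y + norm1 w)%N.
Proof.
rewrite /norm1 -big_split /=; apply: leq_sum => i _; rewrite ffunE.
by rewrite -lez_nat PoszD !abszE; apply: ler_normD.
Qed.

Lemma norm1_N (d : nat) (y : cell d) : norm1 (- y)%R = norm1 y.
Proof. by apply: eq_bigr => i _; rewrite ffunE abszN. Qed.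

Lemma norm1_unitv (d : nat) (i : 'I_d) : norm1 (unitv i) = 1%N.
Proof.
rewrite /norm1 (bigD1 i) //= big1 ?ffunE ?eqxx // => j /negbTE ji.
by rewrite ffunE eq_sym ji.
Qed.

Lemma VN0 d : (0%R : cell d) \in VN d.
Proof. by rewrite /VN !inE eqxx. Qed.
Lemma VNu d (i : 'I_d) : unitv i \in VN d.
Proof. by rewrite /VN !inE; apply/orP; left; apply/orP; right; apply: in_imfset. Qed.
Lemma VNn d (i : 'I_d) : (- unitv i)%R \in VN d.
Proof. by rewrite /VN !inE; apply/orP; right; apply: in_imfset. Qed.

Lemma VN_norm d (v : cell d) : v \in VN d -> (norm1 v <= 1)%N.
Proof.
rewrite /VN !inE => /orP[/orP[/eqP->|/imfsetP[i _ ->]]|/imfsetP[i _ ->]].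
- by rewrite norm1_0.
- by rewrite norm1_unitv.
- by rewrite norm1_N norm1_unitv.
Qed.

Lemma geom d (y : cell d) (t : nat) :
  [exists v : VN d, (norm1 (y - val v)%R <= t)%N] = (norm1 y <= t.+1)%N.
Proof.
apply/existsP/idP.
  case=> v Hv; have := VN_norm (valP v).
  have := norm1_D (y - val v)%R (val v); rewrite subrK => h1 h2; apply: leq_trans h1 _; rewrite -addn1 leq_add //.
move=> Hy; case: (leqP (norm1 y) t) => Ht.
  by exists [` @VN0 d]; rewrite /= subr0.
have [i Hi] : exists i, y i != 0%R.
  apply/existsP; rewrite -negb_forall; apply/negP => /forallP H0.
  have : norm1 y = 0%N by rewrite /norm1 big1 // => i _; rewrite (eqP (H0 i)).
  lia.
case: (ltrP 0%R (y i)) => Hs.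
- exists [` @VNu d i] => /=.
  have E : (norm1 (y - unitv i)%R + absz (y i) = norm1 y + absz ((y - unitv i)%R i))%N.
    by apply: norm1_upd => j ji; rewrite !ffunE eq_sym (negbTE ji) subr0.
  rewrite !ffunE eqxx absz_pred // in E.
  have : (0 < absz (y i))%N by rewrite absz_gt0.
  move: E Ht Hy; move: (absz (y i)) (norm1 y) (norm1 _) => a b e; lia.
- exists [` @VNn d i] => /=.
  have E : (norm1 (y - - unitv i)%R + absz (y i) = norm1 y + absz ((y - - unitv i)%R i))%N.
    by apply: norm1_upd => j ji; rewrite !ffunE eq_sym (negbTE ji) opprK addr0.
  have Hn : (y i < 0)%R by rewrite Order.POrderTheory.lt_neqAle Hi Hs.
  rewrite !ffunE eqxx opprK absz_succ // in E.
  have : (0 < absz (y i))%N by rewrite absz_gt0.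
  move: E Ht Hy; move: (absz (y i)) (norm1 y) (norm1 _) => a b e; lia.
Qed.


Definition gball d R (v : {ffun 'I_d -> 'I_(R.*2.+1)}) : cell d :=
  [ffun i => ((v i : nat)%:Z - R%:Z)%R].
Definition ball d R : {fset cell d} :=
  [fset gball v | v : {ffun 'I_d -> 'I_(R.*2.+1)} & (norm1 (gball v) <= R)%N].

Lemma in_ball d R (y : cell d) : (y \in ball d R) = (norm1 y <= R)%N.
Proof.
apply/imfsetP/idP => [[v /= Hv ->]|Hy] //.
have E : gball [ffun i => inord (absz (y i + R%:Z)%R) : 'I_(R.*2.+1)] = y.
  apply/ffunP => i; rewrite !ffunE.
  have Hi := leq_trans (norm1_ge y i) Hy.
  have H0 : (0 <= y i + R%:Z)%R.
    move: Hi; case: (y i) => n /=; lia.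
  rewrite inordK.
    by rewrite abszE Num.Theory.ger0_norm // addrK.
  move: Hi H0; case: (y i) => n /=; lia.
exists [ffun i => inord (absz (y i + R%:Z)%R) : 'I_(R.*2.+1)]; rewrite ?E //. rewrite inE /=; by rewrite -E in Hy.
Qed.

Definition Tm d (F : CA d) : nat := (\max_(n : ca_N F) norm1 (val n))%N.
Definition TT d (F : CA d) : nat := (Tm F).+1.
Definition DD d (F : CA d) : {fset cell d} := ball d (TT F).

Lemma D0 d (F : CA d) : (0%R : cell d) \in DD F.
Proof. by rewrite /DD in_ball norm1_0. Qed.

Lemma DN d (F : CA d) (n : ca_N F) : val n \in DD F.
Proof. rewrite /DD in_ball /TT /Tm ltnW // ltnS; exact: leq_bigmax. Qed.

Definition lk d (A : {fset cell d}) (X : Type) (g : {ffun A -> X}) (a : X) (z : cell d) : X :=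
  if insub z is Some z' then g z' else a.

Lemma lkE d (A : {fset cell d}) (X : Type) (g : {ffun A -> X}) (a : X) (w : A) :
  lk g a (val w) = g w.
Proof. by rewrite /lk valK. Qed.

Lemma lkN d (A : {fset cell d}) (X : Type) (g : {ffun A -> X}) (a : X) z :
  z \notin A -> lk g a z = a.
Proof. by move=> H; rewrite /lk insubN. Qed.

Definition z0 d (F : CA d) : DD F := [` D0 F].

Definition fK d (F : CA d) (K : {ffun DD F -> ca_Q F}) : ca_Q F :=
  ca_f [ffun n : ca_N F => lk K (K (z0 F)) (val n)].

Notation PT F := {ffun DD F -> option (ca_Q F)}.
Notation QG F := ({ffun DD F -> ca_Q F} * option ('I_(TT F) * PT F))%type.

Definition single d (F : CA d) (q : ca_Q F) : PT F :=
  [ffun y => if val y == 0%R then Some q else None].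

Definition start d (F : CA d) (K : {ffun DD F -> ca_Q F}) : option ('I_(TT F) * PT F) :=
  if fK K != K (z0 F) then Some (ord0, single (fK K)) else None.

Definition msgP d (F : CA d) (s : QG F) : PT F :=
  if s.2 is Some (_, P) then P else [ffun => None].
Definition age d (F : CA d) (s : QG F) : nat :=
  if s.2 is Some (a, _) then val a else 0%N.

Definition Rb (Q : Type) (R : Q -> Q -> Prop) x a : bool :=
  if excluded_middle_informative (R x a) then true else false.
Definition hgt (Q : finType) (R : Q -> Q -> Prop) (a : Q) : nat := #|[pred x | Rb R x a]|.
Definition sumh d (F : CA d) (R : ca_Q F -> ca_Q F -> Prop) (K : {ffun DD F -> ca_Q F}) : nat :=
  (\sum_(y : DD F) hgt R (K y))%N.
Definition mu2 d (F : CA d) (o : option ('I_(TT F) * PT F)) : nat :=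
  if o is Some (a, _) then (TT F - a)%N else (TT F).+1.
Definition mu d (F : CA d) R (s : QG F) : nat := (sumh R s.1 * (TT F).+2 + mu2 s.2)%N.

Definition v0 d : VN d := [` VN0 d].

Definition msg d (F : CA d) (ns : {ffun VN d -> QG F}) (v : VN d) (y : cell d) : option (ca_Q F) :=
  lk (msgP (ns v)) None (y - val v)%R.

Definition Pnew d (F : CA d) (ns : {ffun VN d -> QG F}) : PT F :=
  [ffun y : DD F => if [pick v | msg ns v (val y) != None] is Some v then msg ns v (val y) else None].

Definition agen d (F : CA d) (ns : {ffun VN d -> QG F}) : nat :=
  if [pick v | (ns v).2 != None] is Some v then age (ns v) else 0%N.

Definition rawrule d (F : CA d) (ns : {ffun VN d -> QG F}) : QG F :=
  let self := ns (v0 d) in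
  if [exists y, Pnew ns y != None] then
    if (agen ns).+1 == TT F then
      let K' := [ffun y => odflt (self.1 y) (Pnew ns y)] in (K', start K')
    else (self.1, Some (inord (agen ns).+1, Pnew ns))
  else self.

Definition rule d (F : CA d) R (ns : {ffun VN d -> QG F}) : QG F :=
  if (mu R (rawrule ns) < mu R (ns (v0 d)))%N then rawrule ns else ns (v0 d).

Definition Gca d (F : CA d) (R : ca_Q F -> ca_Q F -> Prop) : CA d := @MkCA d _ (VN d) (@rule d F R).
Arguments Gca {d} F R.

Lemma Gca_freezing d (F : CA d) (R : ca_Q F -> ca_Q F -> Prop) : freezing (Gca F R).
Proof.
exists (fun s' s => s' = s \/ (mu R s' < mu R s)%N); split.
  split; first by move=> x; left.
  split.
    move=> x y [->|H1] [|H2] //; move: H1 H2; lia.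
  move=> x y z [-> //|H1] [<-|H2]; right => //; exact: ltn_trans H1 H2.
move=> c z; rewrite /global /= /rule.
have -> : restr (VN d) c z (v0 d) = c z by rewrite /restr ffunE /= addr0.
by case: ifP => H; [right|left].
Qed.


Lemma RbP (Q : Type) (R : Q -> Q -> Prop) x a : reflect (R x a) (Rb R x a).
Proof. by rewrite /Rb; case: excluded_middle_informative => H; constructor. Qed.

Lemma hgt_le (Q : finType) (R : Q -> Q -> Prop) a b :
  partial_order R -> R a b -> (hgt R a <= hgt R b)%N.
Proof.
move=> [_ [_ Htr]] Hab; apply: subset_leq_card; apply/subsetP => x.
by rewrite !inE => /RbP H; apply/RbP; apply: Htr Hab.
Qed.

Lemma hgt_lt (Q : finType) (R : Q -> Q -> Prop) a b :
  partial_order R -> R a b -> a != b -> (hgt R a < hgt R b)%N.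
Proof.
move=> [Hrf [Has Htr]] Hab Hne; apply: proper_card; apply/properP; split.
  apply/subsetP => x.
  by rewrite !inE => /RbP H; apply/RbP; apply: Htr Hab.
exists b; first by rewrite !inE; apply/RbP.
rewrite !inE; apply/RbP => Hba; move/eqP: Hne; apply; exact: Has.
Qed.

Definition chg d (F : CA d) (c : config d (ca_Q F)) (x y : cell d) : bool :=
  global F c (x + y)%R != c (x + y)%R.

Definition Pt d (F : CA d) (c : config d (ca_Q F)) (t : nat) (x : cell d) : PT F :=
  [ffun y : DD F => if (norm1 (val y) <= t)%N && chg c x (val y)
                    then Some (global F c (x + val y)%R) else None].

Definition St d (F : CA d) (c : config d (ca_Q F)) (t : nat) (x : cell d) : QG F :=
  (restr (DD F) c x, if [exists y, Pt c t x y != None] then Some (inord t, Pt c t x) else None).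

Lemma fK_restr d (F : CA d) (c : config d (ca_Q F)) x :
  fK (restr (DD F) c x) = global F c x.
Proof.
rewrite /fK /global; congr ca_f; apply/ffunP => n; rewrite !ffunE.
by rewrite -[val n]/(val [` DN n]) lkE ffunE.
Qed.

Lemma msgP_St d (F : CA d) (c : config d (ca_Q F)) t x :
  msgP (St c t x) = Pt c t x.
Proof.
rewrite /St /msgP /=; case: ifP => // /negbT; rewrite negb_exists => /forallP H.
apply/ffunP => y; rewrite ffunE; move: (H y); by case: (Pt c t x y).
Qed.

Lemma msg_St d (F : CA d) (c : config d (ca_Q F)) t x (v : VN d) (y : cell d) :
  (t <= TT F)%N ->
  msg (restr (VN d) (St c t) x) v y =
  if (norm1 (y - val v)%R <= t)%N && chg c x y then Some (global F c (x + y)%R) else None.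
Proof.
move=> Ht; rewrite /msg ffunE msgP_St.
have E : (x + val v + (y - val v) = x + y)%R.
  by rewrite [(y - _)%R]addrC addrA addrK.
case: (boolP ((y - val v)%R \in DD F)) => H.
  rewrite -[(y - val v)%R]/(val [` H]) lkE ffunE /=.
  have E2 : (x + fsval v + (y - fsval v) = x + y)%R := E.
  by rewrite /chg E2.
rewrite lkN //; move: H; rewrite /DD in_ball => H.
case: leqP => //= H2; exfalso; move/negP: H; apply; exact: leq_trans H2 Ht.
Qed.

Lemma Pnew_St d (F : CA d) (c : config d (ca_Q F)) t x :
  (t <= TT F)%N ->
  Pnew (restr (VN d) (St c t) x) = Pt c t.+1 x.
Proof.
move=> Ht; apply/ffunP => y; rewrite !ffunE.
case: pickP => [v Hv | Hn].
  move: Hv; rewrite !msg_St //.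
  case: ifP => //= /andP[H1 Hc] _.
  have Hy : (norm1 (val y) <= t.+1)%N by rewrite -geom; apply/existsP; exists v.
  by rewrite Hy Hc.
case: ifP => // /andP[Hy Hc].
move: Hy; rewrite -geom => /existsP[v Hv].
by move: (Hn v); rewrite msg_St // Hv Hc.
Qed.

Lemma agen_St d (F : CA d) (c : config d (ca_Q F)) t x :
  (t < TT F)%N ->
  [exists y, Pnew (restr (VN d) (St c t) x) y != None] ->
  agen (restr (VN d) (St c t) x) = t.
Proof.
move=> Ht /existsP[y]; rewrite /agen ffunE.
case: pickP => [v Hv | Hn].
  case: pickP => [w | Hw].
    rewrite ffunE /age /St /=; case: ifP => //= _ _.
    by rewrite inordK.
  move: Hv; rewrite /msg ffunE msgP_St.
  move: (Hw v); rewrite ffunE /St /=; case: ifP => //= /negbT.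
  rewrite negb_exists => /forallP H _.
  case: (boolP ((val y - val v)%R \in DD F)) => Hd.
    by rewrite -[(val y - val v)%R]/(val [` Hd]) lkE; move: (H [` Hd]) => /negPn /eqP ->.
  by rewrite lkN.
by rewrite eqxx.
Qed.

Lemma Pt_mono d (F : CA d) (c : config d (ca_Q F)) t x :
  [exists y, Pt c t x y != None] -> [exists y, Pt c t.+1 x y != None].
Proof.
move/existsP=> [y]; rewrite ffunE; case: ifP => //= /andP[H1 H2] _.
apply/existsP; exists y; rewrite ffunE (leqW H1) H2 //.
Qed.

Lemma restr_v0 d (X : Type) (c : config d X) x : restr (VN d) c x (v0 d) = c x.
Proof. by rewrite /restr ffunE /= addr0. Qed.

Lemma restr_Fc d (F : CA d) (c : config d (ca_Q F)) x :
  [ffun y => odflt (restr (DD F) c x y) (Pt c (TT F) x y)] = restr (DD F) (global F c) x.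
Proof.
apply/ffunP => y; rewrite !ffunE.
have Hy : (norm1 (val y) <= TT F)%N by rewrite -in_ball; exact: (valP y).
rewrite Hy /=; case: ifP => //= /negbFE /eqP ->; done.
Qed.



Lemma sumh_lt d (F : CA d) (R : ca_Q F -> ca_Q F -> Prop) (c : config d (ca_Q F)) x :
  partial_order R -> (forall (c : config d (ca_Q F)) z, R (global F c z) (c z)) ->
  [exists y, Pt c (TT F) x y != None] ->
  (sumh R (restr (DD F) (global F c) x) < sumh R (restr (DD F) c x))%N.
Proof.
move=> Hpo HF /existsP[y0]; rewrite ffunE; case: ifP => //= /andP[_ Hc] _.
rewrite /sumh (bigD1 y0) //= [X in (_ < X)%N](bigD1 y0) //=.
rewrite -addSn; apply: leq_add.
  by rewrite !ffunE; apply: hgt_lt => //; apply: HF.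
by apply: leq_sum => y _; rewrite !ffunE; apply: hgt_le => //; apply: HF.
Qed.

Lemma mu2_le d (F : CA d) (o : option ('I_(TT F) * PT F)) : (mu2 o <= (TT F).+1)%N.
Proof. by case: o => [[a P]|] //=; rewrite leqW // leq_subr. Qed.

Lemma St1 d (F : CA d) (c : config d (ca_Q F)) t x : (St c t x).1 = restr (DD F) c x.
Proof. by []. Qed.

Lemma step d (F : CA d) (R : ca_Q F -> ca_Q F -> Prop) (c : config d (ca_Q F)) t x :
  partial_order R -> (forall (c : config d (ca_Q F)) z, R (global F c z) (c z)) ->
  (t < TT F)%N ->
  global (Gca F R) (St c t) x =
  if (t.+1 < TT F)%N then St c t.+1 x
  else (restr (DD F) (global F c) x, start (restr (DD F) (global F c) x)).
Proof.
move=> Hpo HF Ht.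
have -> : global (Gca F R) (St c t) x = rule R (restr (VN d) (St c t) x) by [].
rewrite /rule /rawrule.
rewrite !restr_v0 (Pnew_St c x (ltnW Ht)) St1.
case: (boolP [exists y, Pt c t.+1 x y != None]) => Hex.
  rewrite (agen_St Ht); last by rewrite (Pnew_St c x (ltnW Ht)).
  case: eqP => Heq.
    rewrite Heq ltnn restr_Fc ifT //.
    apply: (@leq_trans ((sumh R (restr (DD F) (global F c) x)).+1 * (TT F).+2)).
      by rewrite mulSn addnC ltn_add2l ltnS mu2_le.
    apply: leq_trans (leq_addr _ _); rewrite leq_mul2r /=.
    by apply: sumh_lt => //; rewrite -Heq.
  have Ht1 : (t.+1 < TT F)%N by rewrite ltn_neqAle Ht andbT; apply/eqP.
  rewrite Ht1 /St Hex ifT //.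
  rewrite /mu /= ltn_add2l /= inordK //.
  by case: ifP => _ /=; [rewrite inordK //; lia | lia].
have Hex0 : ~~ [exists y, Pt c t x y != None].
  by apply: contra Hex; apply: Pt_mono.
rewrite ltnn.
case: ifP => Hlt.
  by rewrite /St (negbTE Hex) (negbTE Hex0).
have Heq : t.+1 = TT F.
  by apply/eqP; rewrite eqn_leq Ht leqNgt Hlt.
move: Hex; rewrite Heq negb_exists => /forallP Hn.
have E : restr (DD F) (global F c) x = restr (DD F) c x.
  rewrite -restr_Fc; apply/ffunP => y; rewrite ffunE.
  by move: (Hn y) => /negPn /eqP ->.
rewrite E /St (negbTE Hex0) /start fK_restr.
move: (Hn (z0 F)) => /negPn /eqP; rewrite ffunE /= norm1_0 /= /chg.
case: ifP => // /negbFE /eqP; rewrite addr0 => -> _.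
by rewrite ffunE /= addr0 eqxx.
Qed.


Definition bone d : cell d := [ffun _ => 1%R].

Definition phiG d (F : CA d) (p : {ffun DD F -> ca_Q F}) (_ : cell d) : QG F := (p, start p).

Lemma blockidx1 d (x : cell d) : blockidx (bone d) x = x.
Proof. by apply/ffunP => i; rewrite !ffunE divz1. Qed.

Lemma barphiE d (F : CA d) (c : config d (ca_Q F)) x :
  barphi (bone d) (@phiG d F) c x = (restr (DD F) c x, start (restr (DD F) c x)).
Proof. by rewrite /barphi /phiG blockidx1. Qed.

Lemma St0 d (F : CA d) (c : config d (ca_Q F)) x :
  barphi (bone d) (@phiG d F) c x = St c 0 x.
Proof.
rewrite barphiE /St; congr pair.
rewrite /start fK_restr ffunE /= addr0.
have Hz : forall y : DD F, ((norm1 (val y) <= 0)%N) = (val y == 0%R).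
  move=> y; apply/idP/eqP => [H|->]; last by rewrite norm1_0.
  by apply: norm1_eq0; apply/eqP; rewrite -leqn0.
have Ech : [exists y, Pt c 0 x y != None] = (global F c x != c x).
  apply/existsP/idP => [[y]|H].
    rewrite ffunE Hz; case: (val y =P 0%R) => [->|_] //=; rewrite /chg addr0; by case: ifP.
  exists (z0 F); rewrite ffunE /= norm1_0 /chg addr0 H //.
rewrite Ech; case: ifP => // H.
congr (Some (_, _)).
  by apply: val_inj; rewrite /= inordK.
apply/ffunP => y; rewrite !ffunE Hz.
case: (val y =P 0%R) => [->|_] //=; by rewrite /chg addr0 H.
Qed.

Lemma iterSt d (F : CA d) (R : ca_Q F -> ca_Q F -> Prop) (c : config d (ca_Q F)) t :
  partial_order R -> (forall (c : config d (ca_Q F)) z, R (global F c z) (c z)) ->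
  (t < TT F)%N ->
  iter t (global (Gca F R)) (St c 0) = St c t.
Proof.
move=> Hpo HF; elim: t => [|t IH] Ht //=.
rewrite IH ?(ltnW Ht) //; apply: functional_extensionality => x.
by rewrite step // ?Ht // ltnW.
Qed.

Theorem lemma5 (d : nat) (F : CA d) :
  freezing F ->
  exists G : CA d, freezing G /\ ca_N G = VN d /\ simulates G F.
Proof.
move=> [R [Hpo HF]].
exists (Gca F R); split; first exact: Gca_freezing.
split; first by [].
exists (TT F), (bone d), (DD F), (@phiG d F).
split; first by [].
split; first by move=> i; rewrite ffunE.
split; first exact: D0.
split.
  move=> c1 c2 H; apply: functional_extensionality => x.
  have := congr1 (fun g : config d (QG F) => (g x).1 (z0 F)) H.
  by rewrite /= /barphi /phiG !blockidx1 /= !ffunE /= addr0.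
move=> c.
have -> : barphi (bone d) (@phiG d F) c = St c 0.
  by apply: functional_extensionality => x; rewrite St0.
have -> : iter (TT F) (global (Gca F R)) (St c 0) =
          global (Gca F R) (iter (Tm F) (global (Gca F R)) (St c 0)) by [].
rewrite iterSt //; apply: functional_extensionality => x.
by rewrite step // ltnn barphiE.
Qed.
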